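(* Let $A,B,M,N,c\in\mathbb{R}$ with $B\neq0$, $c\neq0$, $A^2+4Bc>0$, and suppose $K:=-\frac{6(M+N)}{B}>0$. Set $$\varphi_1=-\frac{A+\sqrt{3(A^2+4Bc)}}{2B},\qquad \varphi_2=-\frac{A-\sqrt{3(A^2+4Bc)}}{2B}.$$ Then for every $C_1\in\mathbb{R}$ and either choice of sign, both $$u(x,y,t)=\varphi_1+\frac{\varphi_2-\varphi_1}{1+\exp\!\left(\mp\frac{\varphi_1-\varphi_2}{\sqrt K}(C_1-x-y+ct)\right)}$$ and $$u(x,y,t)=\varphi_1+\frac{\varphi_2-\varphi_1}{1-\exp\!\left(\mp\frac{\varphi_2-\varphi_1}{\sqrt K}(C_1-x-y+ct)\right)}$$ (the latter where the denominator does not vanish) are solutions of $u_t+Auu_x+Bu^2u_x+Mu_{xxx}+Nu_{xyy}=0$.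
   Context: These families correspond to the case where $P(z)=Bz^4+2Az^3-6cz^2-C_2z+C_3$ has two distinct real double roots $\varphi_1,\varphi_2$, i.e. $C_2=\frac{A(A^2+6Bc)}{B^2}$, $C_3=\frac{(A^2+6Bc)^2}{4B^3}$. *)

(* Defs.v *)
From Stdlib Require Import Reals.
From Coquelicot Require Import Coquelicot.
Open Scope R_scope.

Definition Dx (u : R -> R -> R -> R) : R -> R -> R -> R :=
  fun x y t => Derive (fun s => u s y t) x.
Definition Dy (u : R -> R -> R -> R) : R -> R -> R -> R :=
  fun x y t => Derive (fun s => u x s t) y.
Definition Dt (u : R -> R -> R -> R) : R -> R -> R -> R :=
  fun x y t => Derive (fun s => u x y s) t.

Definition solves_on (D : R -> R -> R -> Prop) (A B M N : R)
    (u : R -> R -> R -> R) : Prop :=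
  forall x y t, D x y t ->
    ex_derive (fun s => u x y s) t /\
    ex_derive (fun s => u s y t) x /\
    ex_derive (fun s => Dx u s y t) x /\
    ex_derive (fun s => Dx (Dx u) s y t) x /\
    ex_derive (fun s => u x s t) y /\
    ex_derive (fun s => Dy u x s t) y /\
    ex_derive (fun s => Dy (Dy u) s y t) x /\
    Dt u x y t + A * u x y t * Dx u x y t + B * (u x y t) ^ 2 * Dx u x y t
      + M * Dx (Dx (Dx u)) x y t + N * Dx (Dy (Dy u)) x y t = 0.

(* Main.v *)
Require Import Defs.
From Stdlib Require Import Reals Lra.
From Coquelicot Require Import Coquelicot.
Open Scope R_scope.

Lemma ballR (x e y : R) : ball x e y <-> Rabs (y - x) < e.
Proof. reflexivity. Qed.

Lemma chainq (W W' h : R->R) (V : R -> Prop) q x m l :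
  (forall z, V z -> is_derive W z (W' z)) -> V (h x) -> is_derive h x m ->
  l = q*(m*W'(h x)) -> is_derive (fun s => q * W (h s)) x l.
Proof.
  intros HW Hv Hh ->.
  apply (is_derive_scal (fun s => W (h s)) x q).
  apply (is_derive_comp W h x (W' (h x)) m); auto.
Qed.

Lemma poly_chain (F F' U P : R->R) (V : R -> Prop) :
  (forall w, is_derive F w (F' w)) -> (forall z, V z -> is_derive U z (P z)) ->
  forall z, V z -> is_derive (fun z => F (U z)) z (P z * F' (U z)).
Proof.
  intros HF HU z Hz.
  apply (is_derive_comp F U z (F' (U z)) (P z)); auto.
Qed.

Lemma loc_shift (V : R -> Prop) (f : R -> R) x :
  (forall z, V z -> locally z V) ->
  (forall r, Rabs (f r - f x) = Rabs (r - x)) ->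
  V (f x) -> locally x (fun r => V (f r)).
Proof.
  intros HV Hf Hx. destruct (HV _ Hx) as [e He].
  exists e. intros r Hr. apply He. apply ballR in Hr. apply ballR. rewrite Hf. exact Hr.
Qed.

Lemma key (U : R -> R) (V : R -> Prop) (a p1 p2 A B M N c C1 : R) :
  (forall z, V z -> locally z V) ->
  (forall z, V z -> is_derive U z (a*(U z - p1)*(U z - p2))) ->
  (forall z, c - A*z - B*z^2 - (M+N)*(2*a*(a*(z-p1)*(z-p2)) + (a*(2*z-p1-p2))^2) = 0) ->
  solves_on (fun x y t => V (C1 - x - y + c*t)) A B M N (fun x y t => U (C1 - x - y + c*t)).
Proof.
  intros HV HU Hpol.
  set (P1 := fun z => a*(z-p1)*(z-p2)).
  set (P1' := fun z => a*(2*z-p1-p2)).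
  set (P2' := fun z => 2*a*P1 z + P1' z ^2).
  set (W1 := fun z => P1 (U z)).
  set (W2 := fun z => P1' (U z) * P1 (U z)).
  set (W3 := fun z => P2' (U z) * P1 (U z)).
  assert (H0 : forall z, V z -> is_derive U z (W1 z)) by exact HU.
  assert (H1 : forall z, V z -> is_derive W1 z (W2 z)).
  { intros z Hz. unfold W2. rewrite Rmult_comm.
    apply (poly_chain P1 P1' U W1 V); auto.
    intro w; unfold P1, P1'; auto_derive; auto; ring. }
  assert (H2 : forall z, V z -> is_derive W2 z (W3 z)).
  { intros z Hz. unfold W3. rewrite Rmult_comm.
    apply (poly_chain (fun w => P1' w * P1 w) P2' U W1 V); auto.
    intro w; unfold P2'; unfold P1, P1'; auto_derive; auto; ring. }
  assert (Ex1 : forall x y t, V (C1 - x - y + c*t) -> is_derive (fun s => 1 * U (C1 - s - y + c*t)) x (-1 * W1 (C1 - x - y + c*t))).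
  { intros x y t Hv. apply (chainq U W1 (fun s => C1 - s - y + c*t) V 1 x (-1)); auto.
    auto_derive; auto; ring. ring. }
  assert (HDx1 : forall x y t, V (C1 - x - y + c*t) -> Defs.Dx (fun x y t => U (C1 - x - y + c*t)) x y t = -1 * W1 (C1 - x - y + c*t)).
  { intros x y t Hv. unfold Defs.Dx. apply is_derive_unique.
    eapply is_derive_ext; [|apply Ex1; auto]. intro; simpl; ring. }
  assert (Ex2 : forall x y t, V (C1 - x - y + c*t) -> is_derive (fun s => Defs.Dx (fun x y t => U (C1 - x - y + c*t)) s y t) x (1 * W2 (C1 - x - y + c*t))).
  { intros x y t Hv. eapply is_derive_ext_loc.
    2: apply (chainq W1 W2 (fun s => C1 - s - y + c*t) V (-1) x (-1)); auto.
    - apply filter_imp with (P := fun r => V (C1 - r - y + c*t)).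
      + intros r Hr. rewrite HDx1; auto.
      + apply (loc_shift V (fun r => C1 - r - y + c*t)); auto.
        intro r. replace (C1 - r - y + c*t - (C1 - x - y + c*t)) with (-(r-x)) by ring. apply Rabs_Ropp.
    - auto_derive; auto; ring.
    - ring. }
  assert (HDx2 : forall x y t, V (C1 - x - y + c*t) -> Defs.Dx (Defs.Dx (fun x y t => U (C1 - x - y + c*t))) x y t = 1 * W2 (C1 - x - y + c*t)).
  { intros x y t Hv. unfold Defs.Dx at 1. apply is_derive_unique. apply Ex2; auto. }
  assert (Ex3 : forall x y t, V (C1 - x - y + c*t) -> is_derive (fun s => Defs.Dx (Defs.Dx (fun x y t => U (C1 - x - y + c*t))) s y t) x (-1 * W3 (C1 - x - y + c*t))).
  { intros x y t Hv. eapply is_derive_ext_loc.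
    2: apply (chainq W2 W3 (fun s => C1 - s - y + c*t) V 1 x (-1)); auto.
    - apply filter_imp with (P := fun r => V (C1 - r - y + c*t)).
      + intros r Hr. rewrite HDx2; auto.
      + apply (loc_shift V (fun r => C1 - r - y + c*t)); auto.
        intro r. replace (C1 - r - y + c*t - (C1 - x - y + c*t)) with (-(r-x)) by ring. apply Rabs_Ropp.
    - auto_derive; auto; ring.
    - ring. }
  assert (Ey1 : forall x y t, V (C1 - x - y + c*t) -> is_derive (fun s => 1 * U (C1 - x - s + c*t)) y (-1 * W1 (C1 - x - y + c*t))).
  { intros x y t Hv. apply (chainq U W1 (fun s => C1 - x - s + c*t) V 1 y (-1)); auto.
    auto_derive; auto; ring. ring. }
  assert (HDy1 : forall x y t, V (C1 - x - y + c*t) -> Dy (fun x y t => U (C1 - x - y + c*t)) x y t = -1 * W1 (C1 - x - y + c*t)).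
  { intros x y t Hv. unfold Dy. apply is_derive_unique.
    eapply is_derive_ext; [|apply Ey1; auto]. intro; simpl; ring. }
  assert (Ey2 : forall x y t, V (C1 - x - y + c*t) -> is_derive (fun s => Dy (fun x y t => U (C1 - x - y + c*t)) x s t) y (1 * W2 (C1 - x - y + c*t))).
  { intros x y t Hv. eapply is_derive_ext_loc.
    2: apply (chainq W1 W2 (fun s => C1 - x - s + c*t) V (-1) y (-1)); auto.
    - apply filter_imp with (P := fun r => V (C1 - x - r + c*t)).
      + intros r Hr. rewrite HDy1; auto.
      + apply (loc_shift V (fun r => C1 - x - r + c*t)); auto.
        intro r. replace (C1 - x - r + c*t - (C1 - x - y + c*t)) with (-(r-y)) by ring. apply Rabs_Ropp.
    - auto_derive; auto; ring.
    - ring. }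
  assert (HDy2 : forall x y t, V (C1 - x - y + c*t) -> Dy (Dy (fun x y t => U (C1 - x - y + c*t))) x y t = 1 * W2 (C1 - x - y + c*t)).
  { intros x y t Hv. unfold Dy at 1. apply is_derive_unique. apply Ey2; auto. }
  assert (Exyy : forall x y t, V (C1 - x - y + c*t) -> is_derive (fun s => Dy (Dy (fun x y t => U (C1 - x - y + c*t))) s y t) x (-1 * W3 (C1 - x - y + c*t))).
  { intros x y t Hv. eapply is_derive_ext_loc.
    2: apply (chainq W2 W3 (fun s => C1 - s - y + c*t) V 1 x (-1)); auto.
    - apply filter_imp with (P := fun r => V (C1 - r - y + c*t)).
      + intros r Hr. rewrite HDy2; auto.
      + apply (loc_shift V (fun r => C1 - r - y + c*t)); auto.
        intro r. replace (C1 - r - y + c*t - (C1 - x - y + c*t)) with (-(r-x)) by ring. apply Rabs_Ropp.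
    - auto_derive; auto; ring.
    - ring. }
  assert (Et : forall x y t, V (C1 - x - y + c*t) -> is_derive (fun s => 1 * U (C1 - x - y + c*s)) t (c * W1 (C1 - x - y + c*t))).
  { intros x y t Hv. apply (chainq U W1 (fun s => C1 - x - y + c*s) V 1 t c); auto.
    auto_derive; auto; ring. ring. }
  intros x y t Hv. cbv beta in Hv.
  assert (Et' : is_derive (fun s => U (C1 - x - y + c*s)) t (c * W1 (C1 - x - y + c*t))).
  { eapply is_derive_ext; [|apply Et; auto]. intro; simpl; ring. }
  assert (Ex1' : is_derive (fun s => U (C1 - s - y + c*t)) x (-1 * W1 (C1 - x - y + c*t))).
  { eapply is_derive_ext; [|apply Ex1; auto]. intro; simpl; ring. }
  assert (Ey1' : is_derive (fun s => U (C1 - x - s + c*t)) y (-1 * W1 (C1 - x - y + c*t))).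
  { eapply is_derive_ext; [|apply Ey1; auto]. intro; simpl; ring. }
  split; [eexists; exact Et'|].
  split; [eexists; exact Ex1'|].
  split; [eexists; apply Ex2; auto|].
  split; [eexists; apply Ex3; auto|].
  split; [eexists; exact Ey1'|].
  split; [eexists; apply Ey2; auto|].
  split; [eexists; apply Exyy; auto|].
  assert (Q1 : Dt (fun x y t => U (C1 - x - y + c*t)) x y t = c * W1 (C1 - x - y + c*t)).
  { unfold Dt. apply is_derive_unique. exact Et'. }
  assert (Q3 : Defs.Dx (Defs.Dx (Defs.Dx (fun x y t => U (C1 - x - y + c*t)))) x y t = -1 * W3 (C1 - x - y + c*t)).
  { unfold Defs.Dx at 1. apply is_derive_unique. apply Ex3; auto. }
  assert (Q4 : Defs.Dx (Dy (Dy (fun x y t => U (C1 - x - y + c*t)))) x y t = -1 * W3 (C1 - x - y + c*t)).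
  { unfold Defs.Dx at 1. apply is_derive_unique. apply Exyy; auto. }
  rewrite Q1, Q3, Q4, HDx1 by auto.
  set (z := C1 - x - y + c*t).
  unfold W1, W3, P2', P1, P1'.
  specialize (Hpol (U z)).
  transitivity (a * (U z - p1) * (U z - p2) * (c - A * U z - B * U z ^ 2 -
       (M + N) * (2 * a * (a * (U z - p1) * (U z - p2)) + (a * (2 * U z - p1 - p2)) ^ 2))).
  - ring.
  - rewrite Hpol. ring.
Qed.

Lemma prof_plus (p1 d k z : R) : d <> 0 ->
  is_derive (fun z => p1 + d / (1 + exp (k*z))) z
    ((k/d) * ((p1 + d / (1 + exp (k*z))) - p1) * ((p1 + d / (1 + exp (k*z))) - (p1 + d))).
Proof.
  intros Hd. assert (0 < exp (k*z)) by apply exp_pos.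
  auto_derive. lra. field. split; lra.
Qed.

Lemma prof_minus (p1 d k z : R) : d <> 0 -> 1 - exp (k*z) <> 0 ->
  is_derive (fun z => p1 + d / (1 - exp (k*z))) z
    ((k/d) * ((p1 + d / (1 - exp (k*z))) - p1) * ((p1 + d / (1 - exp (k*z))) - (p1 + d))).
Proof.
  intros Hd Hz.
  auto_derive. exact Hz. field. split; auto.
Qed.

Lemma open_minus (k : R) : forall z, 1 - exp (k*z) <> 0 -> locally z (fun z => 1 - exp (k*z) <> 0).
Proof.
  intros z Hz.
  assert (Hc : continuity_pt (fun z => 1 - exp (k*z)) z).
  { apply continuity_pt_filterlim. apply (ex_derive_continuous (fun z => 1 - exp (k*z))).
    auto_derive. auto. }
  pose proof (proj1 (continuity_pt_locally _ _) Hc) as Hc2. clear Hc. rename Hc2 into Hc.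
  assert (He : 0 < Rabs (1 - exp (k*z))) by (apply Rabs_pos_lt; auto).
  destruct (Hc (mkposreal _ He)) as [e He2].
  exists e. intros w Hw. specialize (He2 w Hw). simpl in He2.
  intro H0. rewrite H0 in He2. rewrite Rminus_0_l, Rabs_Ropp in He2. lra.
Qed.

Lemma poly_id A B M N c K r a z : B <> 0 -> r^2 = 3*(A^2+4*B*c) -> a^2*K = 1 ->
  M + N = -(B*K)/6 ->
  let p1 := - (A + r) / (2 * B) in let p2 := - (A - r) / (2 * B) in
  c - A*z - B*z^2 - (M+N)*(2*a*(a*(z-p1)*(z-p2)) + (a*(2*z-p1-p2))^2) = 0.
Proof.
  intros HB Hr Ha HMN p1 p2. rewrite HMN.
  assert (Hs : p1 + p2 = -A/B) by (unfold p1, p2; field; auto).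
  assert (Hp : p1 * p2 = (A^2 - r^2)/(4*B^2)) by (unfold p1, p2; field; auto).
  transitivity (c - A*z - B*z^2 + (B/6) * (a^2*K) * (6*z^2 - 6*(p1+p2)*z + (p1+p2)^2 + 2*(p1*p2))).
  - field.
  - rewrite Ha, Hs, Hp, Hr. field. auto.
Qed.

Theorem mainTheorem6 (A B M N c C1 eps : R) :
  B <> 0 -> c <> 0 -> A ^ 2 + 4 * B * c > 0 ->
  - (6 * (M + N)) / B > 0 ->
  (eps = 1 \/ eps = -1) ->
  let K := - (6 * (M + N)) / B in
  let phi1 := - (A + sqrt (3 * (A ^ 2 + 4 * B * c))) / (2 * B) in
  let phi2 := - (A - sqrt (3 * (A ^ 2 + 4 * B * c))) / (2 * B) in
  solves_on (fun _ _ _ => True) A B M N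
    (fun x y t => phi1 + (phi2 - phi1) /
       (1 + exp (- eps * ((phi1 - phi2) / sqrt K) * (C1 - x - y + c * t)))) /\
  solves_on
    (fun x y t => 1 - exp (- eps * ((phi2 - phi1) / sqrt K) * (C1 - x - y + c * t)) <> 0)
    A B M N
    (fun x y t => phi1 + (phi2 - phi1) /
       (1 - exp (- eps * ((phi2 - phi1) / sqrt K) * (C1 - x - y + c * t)))).
Proof.
  intros HB Hc HD HK Heps K phi1 phi2.
  set (r := sqrt (3 * (A ^ 2 + 4 * B * c))) in *.
  assert (Hr0 : 0 < r) by (apply sqrt_lt_R0; lra).
  assert (Hr2 : r^2 = 3 * (A ^ 2 + 4 * B * c)) by (unfold r; rewrite pow2_sqrt; lra).
  assert (HsK : 0 < sqrt K) by (apply sqrt_lt_R0; exact HK).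
  assert (HsK2 : sqrt K ^ 2 = K) by (apply pow2_sqrt; apply Rlt_le; exact HK).
  assert (Hd : phi2 - phi1 = r / B) by (unfold phi1, phi2; field; auto).
  assert (Hdn : phi2 - phi1 <> 0).
  { rewrite Hd. intro H0. apply Rmult_integral in H0. destruct H0 as [H0|H0]; [lra|].
    apply Rinv_neq_0_compat in HB. contradiction. }
  assert (Hep2 : eps^2 = 1) by (destruct Heps; subst; ring).
  assert (HMN : M + N = -(B*K)/6) by (unfold K; field; auto).
  assert (Hpn : phi1 + (phi2 - phi1) = phi2) by ring.
  split.
  - set (k := - eps * ((phi1 - phi2) / sqrt K)).
    apply (key (fun z => phi1 + (phi2 - phi1) / (1 + exp (k*z))) (fun _ => True)
             (k / (phi2 - phi1)) phi1 phi2).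
    + intros z _. exists (mkposreal 1 Rlt_0_1). auto.
    + intros z _. pose proof (prof_plus phi1 (phi2 - phi1) k z Hdn) as H. rewrite Hpn in H. exact H.
    + intro z. apply (poly_id A B M N c K r); auto.
      unfold k. transitivity (eps^2 * K / (sqrt K ^ 2)); [field; split; lra|]. rewrite HsK2, Hep2. field. apply Rgt_not_eq. exact HK.
  - set (k := - eps * ((phi2 - phi1) / sqrt K)).
    apply (key (fun z => phi1 + (phi2 - phi1) / (1 - exp (k*z))) (fun z => 1 - exp (k*z) <> 0)
             (k / (phi2 - phi1)) phi1 phi2).
    + apply open_minus.
    + intros z Hz. pose proof (prof_minus phi1 (phi2 - phi1) k z Hdn Hz) as H. rewrite Hpn in H. exact H.
    + intro z. apply (poly_id A B M N c K r); auto.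
      unfold k. transitivity (eps^2 * K / (sqrt K ^ 2)); [field; split; lra|]. rewrite HsK2, Hep2. field. apply Rgt_not_eq. exact HK.
Qed.
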